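(* Let $K\ge 1$ be an integer and $d\in[0,1]$. Let $C_{2K}(d)$ denote the capacity of the $2K$-ary i.i.d. deletion channel with deletion probability $d$ and $C_2(d)$ the capacity of the binary i.i.d. deletion channel with the same deletion probability $d$. Then $$C_{2K}(d)\le C_2(d)+(1-d)\log(K).$$
   Context: The $q$-ary i.i.d. deletion channel with deletion probability $d$: an input sequence $\mathbf X=(x_1,\dots,x_N)\in\{1,\dots,q\}^N$ is transmitted; each symbol is independently (and independently of $\mathbf X$) deleted with probability $d$ or delivered unchanged with probability $1-d$, and the output $\mathbf Y=(y_1,\dots,y_M)$ is the subsequence of surviving symbols in their original order (so $M\sim\mathrm{Binomial}(N,1-d)$); neither transmitter nor receiver knows the positions of deletions. Its capacity is $C_q(d)=\lim_{N\to\infty}\max_{P(\mathbf X)}\frac1N I(\mathbf X;\mathbf Y)$, where the maximum is over all distributions of $\mathbf X$ on $\{1,\dots,q\}^N$. All logarithms are taken to the same base (the unit of information). *)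

(* Defs.v *)
From Stdlib Require Import Reals Lra Lia Arith List.
Import ListNotations.
Open Scope R_scope.

(** Alphabet {1,...,q} is represented by the naturals {0,...,q-1}. *)

Fixpoint words (q N : nat) : list (list nat) :=
  match N with
  | O => [ [] ]
  | S n => flat_map (fun w => map (fun a => a :: w) (seq 0 q)) (words q n)
  end.

Definition out_words (q N : nat) : list (list nat) :=
  flat_map (words q) (seq 0 (S N)).

(** Number of ways [y] arises from [x] as a subsequence
    (number of deletion patterns mapping [x] to [y]). *)
Fixpoint emb (x y : list nat) : nat :=
  match x, y with
  | _, [] => 1%nat
  | [], _ :: _ => 0%nat
  | a :: x', b :: y' =>
      (emb x' y + (if Nat.eqb a b then emb x' y' else 0))%nat
  end.

Definition W (d : R) (x y : list nat) : R :=
  INR (emb x y) * d ^ (length x - length y) * (1 - d) ^ (length y).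

Definition sum_list (f : list nat -> R) (l : list (list nat)) : R :=
  fold_right (fun a acc => f a + acc) 0 l.

Definition is_dist (q N : nat) (P : list nat -> R) : Prop :=
  (forall x, In x (words q N) -> 0 <= P x) /\ sum_list P (words q N) = 1.

Definition PY (q N : nat) (d : R) (P : list nat -> R) (y : list nat) : R :=
  sum_list (fun x => P x * W d x y) (words q N).

(** Mutual information I(X;Y) (natural logarithm; zero-probability terms
    contribute 0). *)
Definition MI (q N : nat) (d : R) (P : list nat -> R) : R :=
  sum_list (fun x =>
    sum_list (fun y =>
      if Rlt_dec 0 (P x * W d x y)
      then P x * W d x y * ln (W d x y / PY q N d P y)
      else 0) (out_words q N)) (words q N).

Definition MI_set (q N : nat) (d : R) : R -> Prop :=
  fun r => exists P, is_dist q N P /\ r = MI q N d P.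

(** [C] is the capacity C_q(d) = lim_N (1/N) max_P I(X;Y). *)
Definition is_capacity (q : nat) (d : R) (C : R) : Prop :=
  exists M : nat -> R,
    (forall N, is_lub (MI_set q N d) (M N)) /\
    Un_cv (fun n => M (S n) / INR (S n)) C.

(* Main.v *)
Require Import Defs.
From Stdlib Require Import Reals.
Open Scope R_scope.
From Stdlib Require Import Lra Lia List Arith.
Import ListNotations.


Lemma ln_le_minus1 x : 0 < x -> ln x <= x - 1.
Proof. intro H. pose proof (exp_ineq1_le (ln x)). rewrite exp_ln in H0; lra. Qed.

Lemma ln_le' x y : 0 < x -> x <= y -> ln x <= ln y.
Proof. intros Hx Hxy. destruct (Req_dec x y). subst; lra.
  left; apply ln_increasing; lra. Qed.

Definition sumR {A} (f : A -> R) (l : list A) : R :=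
  fold_right (fun a acc => f a + acc) 0 l.

Lemma sum_list_sumR f l : sum_list f l = sumR f l.
Proof. reflexivity. Qed.

Lemma sumR_cons {A : Type} (f : A -> R) a l : sumR f (a :: l) = f a + sumR f l.
Proof. reflexivity. Qed.
Lemma sumR_nil {A : Type} (f : A -> R) : sumR f [] = 0.
Proof. reflexivity. Qed.

Lemma sumR_app {A : Type} (f : A -> R) l1 l2 : sumR f (l1 ++ l2) = sumR f l1 + sumR f l2.
Proof. induction l1; simpl; [lra|rewrite IHl1; lra]. Qed.

Lemma sumR_map {A B : Type} (f : B -> R) (g : A -> B) l : sumR f (map g l) = sumR (fun a => f (g a)) l.
Proof. induction l; simpl; [lra|rewrite IHl; lra]. Qed.


Lemma sumR_ext_in {A : Type} (f g : A -> R) l : (forall a, In a l -> f a = g a) -> sumR f l = sumR g l.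
Proof. induction l; simpl; intros H; [lra|]. rewrite H, IHl; auto. Qed.

Lemma sumR_le_in {A : Type} (f g : A -> R) l : (forall a, In a l -> f a <= g a) -> sumR f l <= sumR g l.
Proof. induction l; simpl; intros H; [lra|]. pose proof (H a (or_introl eq_refl)).
  pose proof (IHl (fun b Hb => H b (or_intror Hb))). lra. Qed.

Lemma sumR_plus {A : Type} (f g : A -> R) l : sumR (fun a => f a + g a) l = sumR f l + sumR g l.
Proof. induction l; simpl; [lra|rewrite IHl; lra]. Qed.

Lemma sumR_scal {A : Type} c (f : A -> R) l : sumR (fun a => c * f a) l = c * sumR f l.
Proof. induction l; simpl; [lra|rewrite IHl; lra]. Qed.

Lemma sumR_0 {A : Type} l : sumR (fun _ : A => 0) l = 0.
Proof. induction l; simpl; [lra|rewrite IHl; lra]. Qed.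

Lemma sumR_const {A : Type} c l : sumR (fun _ : A => c) l = INR (length l) * c.
Proof. induction l; simpl length; [simpl; lra|]. rewrite S_INR. simpl. rewrite IHl; lra. Qed.

Lemma sumR_swap {A B : Type} (F : A -> B -> R) l1 l2 :
  sumR (fun a => sumR (fun b => F a b) l2) l1 = sumR (fun b => sumR (fun a => F a b) l1) l2.
Proof. induction l1. rewrite sumR_nil. symmetry. apply sumR_0.
  rewrite sumR_cons, IHl1, <- sumR_plus. reflexivity. Qed.

Lemma sumR_nonneg {A : Type} (f : A -> R) l : (forall a, In a l -> 0 <= f a) -> 0 <= sumR f l.
Proof. intro H. pose proof (sumR_le_in (fun _ => 0) f l H). rewrite sumR_0 in H0; lra. Qed.

Lemma sumR_term {A : Type} (f : A -> R) l a : (forall a, In a l -> 0 <= f a) -> In a l -> f a <= sumR f l.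
Proof. induction l; simpl; intros H Ha; [contradiction|].
  destruct Ha as [<-|Ha].
  - pose proof (sumR_nonneg f l (fun b Hb => H b (or_intror Hb))). lra.
  - pose proof (H a0 (or_introl eq_refl)). pose proof (IHl (fun b Hb => H b (or_intror Hb)) Ha). lra.
Qed.

Lemma sumR_flat_map {A B : Type} (f : B -> R) (g : A -> list B) l :
  sumR f (flat_map g l) = sumR (fun a => sumR f (g a)) l.
Proof. induction l; [reflexivity|]. cbn [flat_map]. rewrite sumR_app, IHl, !sumR_cons. reflexivity. Qed.

Lemma In_words q n w : In w (words q n) <-> length w = n /\ Forall (fun a => (a < q)%nat) w.
Proof.
  revert w; induction n; intro w; simpl.
  - split. intros [<-|[]]. split; auto.
    intros [H _]. destruct w; [auto|discriminate].
  - rewrite in_flat_map. split.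
    + intros [w' [Hw' Hin]]. apply in_map_iff in Hin. destruct Hin as [a [<- Ha]].
      apply in_seq in Ha. apply IHn in Hw'. destruct Hw'. simpl; split; [lia|]. constructor; auto; lia.
    + intros [Hl HF]. destruct w as [|a w']; [discriminate|]. inversion HF; subst.
      exists w'. split. apply IHn. split; auto. apply in_map_iff. exists a. split; auto.
      apply in_seq; lia.
Qed.

Lemma sum_words_S q n (F : list nat -> R) :
  sumR F (words q (S n)) = sumR (fun w => sumR (fun a => F (a :: w)) (seq 0 q)) (words q n).
Proof. simpl. rewrite sumR_flat_map. apply sumR_ext_in. intros. rewrite sumR_map. reflexivity. Qed.

Lemma sum_seq_ind (g : nat -> R) a n s :
  sumR (fun b => if Nat.eqb a b then g b else 0) (seq s n) =
  if andb (Nat.leb s a) (Nat.ltb a (s + n)) then g a else 0.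
Proof.
  revert s; induction n; intro s.
  - cbn [seq]. rewrite sumR_nil. destruct (Nat.leb_spec s a); destruct (Nat.ltb_spec a (s+0)); simpl; try lra; lia.
  - cbn [seq]. rewrite sumR_cons, IHn. destruct (Nat.eqb_spec a s).
    + subst. destruct (Nat.leb_spec (S s) s); [lia|].
      destruct (Nat.leb_spec s s); [|lia]. destruct (Nat.ltb_spec s (s + S n)); [|lia]. simpl; lra.
    + destruct (Nat.leb_spec (S s) a); destruct (Nat.ltb_spec a (S s + n));
      destruct (Nat.leb_spec s a); destruct (Nat.ltb_spec a (s + S n)); simpl; try lra; lia.
Qed.

Lemma sum_seq_ind0 (g : nat -> R) a q : (a < q)%nat ->
  sumR (fun b => if Nat.eqb a b then g b else 0) (seq 0 q) = g a.
Proof. intro H. rewrite sum_seq_ind. replace (andb (Nat.leb 0 a) (Nat.ltb a (0 + q))) with true; auto.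
  symmetry. apply andb_true_intro; split; [apply Nat.leb_le|apply Nat.ltb_lt]; lia. Qed.

Lemma list_eqb_spec (u v : list nat) : {u = v} + {u <> v}.
Proof. apply list_eq_dec, Nat.eq_dec. Qed.

Lemma sum_words_ind q n (G : list nat -> R) c : In c (words q n) ->
  sumR (fun b => if list_eqb_spec c b then G b else 0) (words q n) = G c.
Proof.
  revert G c; induction n; intros G c Hc.
  - simpl in Hc. destruct Hc as [<-|[]]. simpl. destruct (list_eqb_spec [] []); [lra|congruence].
  - rewrite sum_words_S. apply In_words in Hc. destruct Hc as [Hl HF].
    destruct c as [|c0 c']; [discriminate|]. inversion HF; subst. simpl in Hl. injection Hl as Hl.
    transitivity (sumR (fun w => if list_eqb_spec c' w then G (c0 :: w) else 0) (words q n)).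
    + apply sumR_ext_in. intros w _.
      destruct (list_eqb_spec c' w).
      * subst. rewrite <- (sum_seq_ind0 (fun a => G (a :: w)) c0 q) by auto.
        apply sumR_ext_in. intros b _. destruct (Nat.eqb c0 b) eqn:E.
        apply Nat.eqb_eq in E; subst. destruct (list_eqb_spec (b::w) (b::w)); congruence.
        apply Nat.eqb_neq in E. destruct (list_eqb_spec (c0::w) (b::w)); congruence.
      * transitivity (sumR (fun _:nat => 0) (seq 0 q)); [|apply sumR_0]. apply sumR_ext_in. intros b _.
        destruct (list_eqb_spec (c0::c') (b::w)); [congruence|auto].
    + apply (IHn (fun w => G (c0 :: w))). apply In_words. auto.
Qed.


Lemma emb_nil_r x : emb x [] = 1%nat.
Proof. destruct x; reflexivity. Qed.

Lemma emb_long x y : (length x < length y)%nat -> emb x y = 0%nat.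
Proof.
  revert y; induction x as [|a x IH]; intros y H.
  - destruct y; simpl in *; [lia|reflexivity].
  - destruct y as [|b y]; simpl in *; [lia|].
    rewrite IH by (simpl; lia). destruct (Nat.eqb a b); [rewrite IH by lia|]; reflexivity.
Qed.

Lemma emb_le_map (f : nat -> nat) x y : (emb x y <= emb (map f x) (map f y))%nat.
Proof.
  revert y; induction x as [|a x IH]; intros y.
  - destruct y; simpl; lia.
  - destruct y as [|b y]; simpl; [lia|].
    pose proof (IH (b :: y)) as H1. simpl in H1. pose proof (IH y) as H2.
    destruct (Nat.eqb_spec a b); [subst; rewrite Nat.eqb_refl; lia|].
    destruct (Nat.eqb (f a) (f b)); lia.
Qed.

Lemma A_rec q a x m (F : list nat -> R) : (a < q)%nat ->
  sumR (fun y => INR (emb (a :: x) y) * F y) (words q (S m)) =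
  sumR (fun y => INR (emb x y) * F y) (words q (S m)) +
  sumR (fun w => INR (emb x w) * F (a :: w)) (words q m).
Proof.
  intro Ha. rewrite !sum_words_S, <- sumR_plus. apply sumR_ext_in. intros w _.
  rewrite <- (sum_seq_ind0 (fun b => INR (emb x w) * F (b :: w)) a q Ha), <- sumR_plus.
  apply sumR_ext_in. intros b _. cbn [emb]. rewrite plus_INR.
  destruct (Nat.eqb a b); simpl; lra.
Qed.

Lemma L1 q (f : nat -> nat) (Hf : forall a, (a < q)%nat -> (f a < 2)%nat) x :
  Forall (fun a => (a < q)%nat) x -> forall M (psi : list nat -> R),
  sumR (fun y => INR (emb x y) * psi (map f y)) (words q M) =
  sumR (fun c => INR (emb (map f x) c) * psi c) (words 2 M).
Proof.
  induction x as [|a x IH]; intros HF M psi.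
  - destruct M.
    + reflexivity.
    + transitivity 0; [|symmetry]; [transitivity (sumR (fun _ : list nat => 0) (words q (S M)))|
        transitivity (sumR (fun _ : list nat => 0) (words 2 (S M)))]; try apply sumR_0;
      apply sumR_ext_in; intros y Hy; apply In_words in Hy; destruct Hy as [Hl _];
      destruct y; try discriminate; simpl; lra.
  - inversion HF; subst. destruct M.
    + cbn [words]. rewrite !sumR_cons, !sumR_nil, !emb_nil_r. reflexivity.
    + rewrite A_rec by auto. cbn [map]. rewrite A_rec by auto.
      rewrite (IH H2 (S M) psi), (IH H2 M (fun c => psi (f a :: c))). reflexivity.
Qed.

Definition fK (K a : nat) : nat := if Nat.ltb a K then 0%nat else 1%nat.

Lemma fK_lt2 K a : (fK K a < 2)%nat.
Proof. unfold fK; destruct (Nat.ltb a K); lia. Qed.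

Lemma sum_seq_fK K (g : nat -> R) :
  sumR (fun a => g (fK K a)) (seq 0 (2 * K)) = INR K * (g 0%nat + g 1%nat).
Proof.
  replace (2 * K)%nat with (K + K)%nat by lia. rewrite seq_app, sumR_app.
  rewrite (sumR_ext_in _ (fun _ => g 0%nat) (seq 0 K)), (sumR_ext_in _ (fun _ => g 1%nat) (seq (0+K) K)).
  - rewrite !sumR_const, !length_seq. lra.
  - intros a Ha. apply in_seq in Ha. unfold fK. destruct (Nat.ltb_spec a K); [lia|reflexivity].
  - intros a Ha. apply in_seq in Ha. unfold fK. destruct (Nat.ltb_spec a K); [reflexivity|lia].
Qed.

Lemma regroup_pow K M (psi : list nat -> R) :
  sumR (fun y => psi (map (fK K) y)) (words (2 * K) M) = INR K ^ M * sumR psi (words 2 M).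
Proof.
  revert psi; induction M; intro psi.
  - cbn [words]. rewrite !sumR_cons, !sumR_nil. simpl. lra.
  - rewrite !sum_words_S.
    rewrite (sumR_ext_in _ (fun w => INR K * (psi (0%nat :: map (fK K) w) + psi (1%nat :: map (fK K) w)))).
    + rewrite sumR_scal, sumR_plus, (IHM (fun c => psi (0%nat :: c))), (IHM (fun c => psi (1%nat :: c))).
      rewrite (sumR_ext_in (fun w => sumR (fun a : nat => psi (a :: w)) (seq 0 2)) (fun w => psi (0%nat::w) + psi (1%nat::w))).
      rewrite sumR_plus. simpl. ring.
      intros w _. cbn [seq]. rewrite !sumR_cons, sumR_nil. ring.
    + intros w _. cbn [map]. apply (sum_seq_fK K (fun b => psi (b :: map (fK K) w))).
Qed.


Definition Acnt q x M := sumR (fun y => INR (emb x y)) (words q M).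

Definition V q d x (phi : nat -> R) :=
  sumR (fun M => Acnt q x M * (d ^ (length x - M) * (1 - d) ^ M) * phi M) (seq 0 (S (length x))).

Lemma Acnt_0 q x : Acnt q x 0 = 1.
Proof. unfold Acnt. cbn [words]. rewrite sumR_cons, sumR_nil, emb_nil_r. simpl; lra. Qed.

Lemma Acnt_long q x M : (length x < M)%nat -> Acnt q x M = 0.
Proof. intro H. unfold Acnt. transitivity (sumR (fun _ : list nat => 0) (words q M)); [|apply sumR_0].
  apply sumR_ext_in. intros y Hy. apply In_words in Hy. rewrite emb_long by lia. reflexivity. Qed.

Lemma Acnt_cons q a x m : (a < q)%nat -> Acnt q (a :: x) (S m) = Acnt q x (S m) + Acnt q x m.
Proof. intro Ha. unfold Acnt. pose proof (A_rec q a x m (fun _ => 1) Ha) as H.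
  rewrite !(sumR_ext_in (fun y => INR (emb _ y) * 1) (fun y => INR (emb _ y))) in H by (intros; ring).
  exact H. Qed.

Lemma out_sum q d x N (F : nat -> R) :
  sumR (fun y => W d x y * F (length y)) (out_words q N) =
  sumR (fun M => Acnt q x M * (d ^ (length x - M) * (1 - d) ^ M) * F M) (seq 0 (S N)).
Proof.
  unfold out_words. rewrite sumR_flat_map. apply sumR_ext_in. intros M _.
  unfold Acnt.
  transitivity (sumR (fun y => (d ^ (length x - M) * (1 - d) ^ M * F M) * INR (emb x y)) (words q M)).
  - apply sumR_ext_in. intros y Hy. apply In_words in Hy. destruct Hy as [Hl _].
    unfold W. rewrite Hl. ring.
  - rewrite sumR_scal. ring.
Qed.

Lemma sum_seq_S0 (g : nat -> R) n : sumR g (seq 0 (S n)) = g 0%nat + sumR (fun m => g (S m)) (seq 0 n).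
Proof. rewrite <- cons_seq, <- seq_shift, sumR_cons, sumR_map. reflexivity. Qed.

Lemma sum_seq_last (g : nat -> R) n : sumR g (seq 0 (S n)) = sumR g (seq 0 n) + g n.
Proof. rewrite seq_S, sumR_app, sumR_cons, sumR_nil. simpl. ring. Qed.

Lemma V_cons q d a x phi : (a < q)%nat ->
  V q d (a :: x) phi = d * V q d x phi + (1 - d) * V q d x (fun m => phi (S m)).
Proof.
  intro Ha. unfold V. cbn [length]. set (n := length x).
  rewrite <- cons_seq, <- seq_shift, sumR_cons, sumR_map, Acnt_0.
  rewrite (sumR_ext_in _ (fun m => Acnt q x (S m) * (d ^ (n - m) * (1 - d) ^ S m) * phi (S m) +
     (1 - d) * (Acnt q x m * (d ^ (n - m) * (1 - d) ^ m) * phi (S m)))).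
  2:{ intros m _. rewrite Acnt_cons by auto. simpl Nat.sub. simpl pow. ring. }
  rewrite sumR_plus, sumR_scal.
  rewrite (sum_seq_S0 (fun M => Acnt q x M * (d ^ (n - M) * (1 - d) ^ M) * phi M)), Acnt_0.
  rewrite (sum_seq_last (fun m => Acnt q x (S m) * (d ^ (n - m) * (1 - d) ^ S m) * phi (S m))).
  rewrite (Acnt_long q x (S n)) by lia.
  rewrite (sumR_ext_in (fun m => Acnt q x (S m) * (d ^ (n - m) * (1 - d) ^ S m) * phi (S m))
     (fun m => d * (Acnt q x (S m) * (d ^ (n - S m) * (1 - d) ^ S m) * phi (S m)))).
  2:{ intros m Hm. apply in_seq in Hm. replace (n - m)%nat with (S (n - S m)) by lia. simpl pow. ring. }
  rewrite sumR_scal. simpl Nat.sub. replace (S n - 0)%nat with (S n) by lia. rewrite Nat.sub_0_r. simpl pow. ring.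
Qed.

Lemma V_nil q d phi : V q d [] phi = phi 0%nat.
Proof. unfold V. cbn [length seq]. rewrite sumR_cons, sumR_nil, Acnt_0. simpl. ring. Qed.

Lemma V_ext q d x phi psi : (forall m, phi m = psi m) -> V q d x phi = V q d x psi.
Proof. intro H. unfold V. apply sumR_ext_in. intros. rewrite H; reflexivity. Qed.

Lemma V_plus q d x phi psi : V q d x (fun m => phi m + psi m) = V q d x phi + V q d x psi.
Proof. unfold V. rewrite <- sumR_plus. apply sumR_ext_in. intros; ring. Qed.

Lemma V1 q d x : Forall (fun a => (a < q)%nat) x -> V q d x (fun _ => 1) = 1.
Proof. induction x as [|a x IH]; intro HF. apply V_nil. inversion HF; subst.
  rewrite V_cons by auto. rewrite IH by auto. ring. Qed.

Lemma Vid q d x : Forall (fun a => (a < q)%nat) x -> V q d x INR = INR (length x) * (1 - d).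
Proof. induction x as [|a x IH]; intro HF. rewrite V_nil. simpl; ring. inversion HF; subst.
  rewrite V_cons by auto. rewrite (V_ext q d x (fun m => INR (S m)) (fun m => INR m + 1)) by (intro; apply S_INR).
  rewrite V_plus, IH, V1 by auto. cbn [length]. rewrite S_INR. ring. Qed.

Lemma sumW_1 q d x : Forall (fun a => (a < q)%nat) x ->
  sumR (fun y => W d x y) (out_words q (length x)) = 1.
Proof. intro HF. rewrite <- (V1 q d x HF). unfold V. rewrite <- out_sum.
  apply sumR_ext_in. intros; ring. Qed.

Lemma sumW_len q d x : Forall (fun a => (a < q)%nat) x ->
  sumR (fun y => W d x y * INR (length y)) (out_words q (length x)) = INR (length x) * (1 - d).
Proof. intro HF. rewrite <- (Vid q d x HF). unfold V. rewrite <- out_sum. reflexivity. Qed.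


Lemma ln_div' x y : 0 < x -> 0 < y -> ln (x / y) = ln x - ln y.
Proof. intros. unfold Rdiv. rewrite ln_mult, ln_Rinv; try lra. apply Rinv_0_lt_compat; lra. Qed.

Lemma key_ineq pw w w' py q2 kM L : 0 < pw -> 0 < w -> w <= w' -> 0 < py -> 0 < q2 -> 0 < kM ->
  ln kM = L ->
  pw * ln (w / py) <= pw * ln (w' / q2) + pw * L + pw * ((q2 / kM) / py - 1).
Proof.
  intros Hpw Hw Hww Hpy Hq Hk HL.
  assert (Hw' : 0 < w') by lra.
  assert (HQ : 0 < q2 / kM) by (apply Rdiv_lt_0_compat; lra).
  assert (HQp : 0 < q2 / kM / py) by (apply Rdiv_lt_0_compat; lra).
  pose proof (ln_le_minus1 _ HQp) as H1.
  rewrite !ln_div' in H1 by lra. rewrite !ln_div' by lra.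
  pose proof (ln_le' _ _ Hw Hww). rewrite HL in H1.
  rewrite <- !Rmult_plus_distr_l. apply Rmult_le_compat_l; lra.
Qed.

Lemma W_nonneg d x y : 0 <= d <= 1 -> 0 <= W d x y.
Proof. intro Hd. unfold W. apply Rmult_le_pos; [apply Rmult_le_pos|]; [apply pos_INR| |];
  apply pow_le; lra. Qed.

Lemma W_le_map d f x y : 0 <= d <= 1 -> W d x y <= W d (map f x) (map f y).
Proof. intro Hd. unfold W. rewrite !length_map.
  apply Rmult_le_compat_r; [apply pow_le; lra|]. apply Rmult_le_compat_r; [apply pow_le; lra|].
  apply le_INR, emb_le_map. Qed.

Lemma in_words_map K N x : In x (words (2 * K) N) -> In (map (fK K) x) (words 2 N).
Proof. intro H. apply In_words in H. apply In_words. destruct H as [Hl HF]. split.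
  rewrite length_map; auto. apply Forall_map. apply Forall_forall. intros. apply fK_lt2. Qed.

Lemma lift_L1 K d N x (Psi : list nat -> R) : In x (words (2 * K) N) ->
  sumR (fun y => W d x y * Psi (map (fK K) y)) (out_words (2 * K) N) =
  sumR (fun c => W d (map (fK K) x) c * Psi c) (out_words 2 N).
Proof.
  intro Hx. apply In_words in Hx. destruct Hx as [Hl HF].
  unfold out_words. rewrite !sumR_flat_map. apply sumR_ext_in. intros M _.
  transitivity ((d ^ (N - M) * (1 - d) ^ M) *
     sumR (fun y => INR (emb x y) * Psi (map (fK K) y)) (words (2 * K) M)).
  - rewrite <- sumR_scal. apply sumR_ext_in. intros y Hy. apply In_words in Hy. destruct Hy as [Hy _].
    unfold W. rewrite Hy, Hl. ring.
  - rewrite (L1 (2 * K) (fK K)) by (auto; intros; apply fK_lt2).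
    rewrite <- sumR_scal. apply sumR_ext_in. intros c Hc. apply In_words in Hc. destruct Hc as [Hc _].
    unfold W. rewrite Hc, length_map, Hl. ring.
Qed.

Section Main.
Variables (K : nat) (d : R) (N : nat) (P : list nat -> R).
Hypothesis HK : (1 <= K)%nat.
Hypothesis Hd : 0 <= d <= 1.
Hypothesis HP : is_dist (2 * K) N P.

Let X := words (2 * K) N.

Definition P2 b := sumR (fun x => if list_eqb_spec (map (fK K) x) b then P x else 0) (words (2 * K) N).
Let PY2 c := PY 2 N d P2 c.

Lemma P_nonneg x : In x X -> 0 <= P x.
Proof. intro; apply (proj1 HP); auto. Qed.

Lemma P_sum : sumR P X = 1.
Proof. rewrite <- sum_list_sumR. apply (proj2 HP). Qed.

Lemma P2_nonneg b : 0 <= P2 b.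
Proof. unfold P2. apply sumR_nonneg. intros x Hx. destruct (list_eqb_spec _ b); [apply P_nonneg; auto|lra]. Qed.

Lemma P2_ge x : In x X -> P x <= P2 (map (fK K) x).
Proof. intro Hx. unfold P2.
  eapply Rle_trans; [|apply (sumR_term _ _ x)]; auto.
  - cbv beta. destruct (list_eqb_spec (map (fK K) x) (map (fK K) x)); [lra|congruence].
  - intros a Ha. destruct (list_eqb_spec _ _); [apply P_nonneg; auto|lra].
Qed.

Lemma regroup (G : list nat -> R) :
  sumR (fun x => P x * G (map (fK K) x)) X = sumR (fun b => P2 b * G b) (words 2 N).
Proof.
  unfold P2. transitivity (sumR (fun b => sumR (fun x =>
     if list_eqb_spec (map (fK K) x) b then P x * G b else 0) (words (2 * K) N)) (words 2 N)).
  - rewrite <- sumR_swap. apply sumR_ext_in. intros x Hx.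
    rewrite (sum_words_ind 2 N (fun b => P x * G b) (map (fK K) x)); [reflexivity|].
    apply in_words_map; auto.
  - apply sumR_ext_in. intros b _. rewrite Rmult_comm, <- sumR_scal. apply sumR_ext_in.
    intros x _. destruct (list_eqb_spec _ _); ring.
Qed.

Lemma P2_sum : sumR P2 (words 2 N) = 1.
Proof. rewrite <- P_sum. pose proof (regroup (fun _ => 1)).
  rewrite (sumR_ext_in (fun x => P x * 1) P) in H by (intros; ring).
  rewrite (sumR_ext_in (fun b => P2 b * 1) P2) in H by (intros; ring). auto. Qed.

Lemma P2_dist : is_dist 2 N P2.
Proof. split. intros; apply P2_nonneg. rewrite sum_list_sumR. apply P2_sum. Qed.

Lemma PY_sumR q P' y : PY q N d P' y = sumR (fun x => P' x * W d x y) (words q N).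
Proof. reflexivity. Qed.

Lemma PY_ge x y : In x X -> P x * W d x y <= PY (2 * K) N d P y.
Proof. intro Hx. rewrite PY_sumR. apply (sumR_term (fun x => P x * W d x y)); auto.
  intros; apply Rmult_le_pos; [apply P_nonneg; auto|apply W_nonneg; auto]. Qed.

Lemma PY2_ge b c : In b (words 2 N) -> P2 b * W d b c <= PY2 c.
Proof. intro Hb. unfold PY2. rewrite PY_sumR. apply (sumR_term (fun b => P2 b * W d b c)); auto.
  intros; apply Rmult_le_pos; [apply P2_nonneg|apply W_nonneg; auto]. Qed.

Lemma PY2_nonneg c : 0 <= PY2 c.
Proof. unfold PY2. rewrite PY_sumR. apply sumR_nonneg. intros.
  apply Rmult_le_pos; [apply P2_nonneg|apply W_nonneg; auto]. Qed.

Definition Qy y := PY2 (map (fK K) y) / INR K ^ length y.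

Lemma INRK_pos : 0 < INR K.
Proof. apply lt_0_INR. lia. Qed.

Lemma Qy_nonneg y : 0 <= Qy y.
Proof. unfold Qy. apply Rmult_le_pos. apply PY2_nonneg. left. apply Rinv_0_lt_compat, pow_lt, INRK_pos. Qed.

Lemma sum_PY : sumR (fun y => PY (2 * K) N d P y) (out_words (2 * K) N) = 1.
Proof.
  rewrite (sumR_ext_in _ (fun y => sumR (fun x => P x * W d x y) X)) by (intros; apply PY_sumR).
  rewrite sumR_swap. rewrite <- P_sum. apply sumR_ext_in. intros x Hx.
  rewrite sumR_scal. pose proof Hx as Hx'. apply In_words in Hx'. destruct Hx' as [Hl HF].
  rewrite <- Hl, sumW_1 by auto. ring.
Qed.

Lemma sum_Qy : sumR Qy (out_words (2 * K) N) = 1.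
Proof.
  unfold out_words. rewrite sumR_flat_map.
  transitivity (sumR (fun M => sumR PY2 (words 2 M)) (seq 0 (S N))).
  - apply sumR_ext_in. intros M _.
    transitivity (/ INR K ^ M * sumR (fun y => PY2 (map (fK K) y)) (words (2 * K) M)).
    + rewrite <- sumR_scal. apply sumR_ext_in. intros y Hy. apply In_words in Hy.
      destruct Hy as [Hy _]. unfold Qy. rewrite Hy. unfold Rdiv. ring.
    + rewrite regroup_pow. field. apply pow_nonzero. pose proof INRK_pos; lra.
  - rewrite <- sumR_flat_map. fold (out_words 2 N).
    rewrite (sumR_ext_in _ (fun c => sumR (fun b => P2 b * W d b c) (words 2 N))) by (intros; reflexivity).
    rewrite sumR_swap. rewrite <- P2_sum. apply sumR_ext_in. intros b Hb.
    rewrite sumR_scal. pose proof Hb as Hb'. apply In_words in Hb'. destruct Hb' as [Hl HF].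
    rewrite <- Hl, sumW_1 by auto. ring.
Qed.

Definition zeta b c := if Rlt_dec 0 (P2 b * W d b c) then ln (W d b c / PY2 c) else 0.
Definition t3 x y := if Rlt_dec 0 (P x * W d x y) then
   P x * W d x y * (Qy y / PY (2 * K) N d P y - 1) else 0.

Lemma pointwise x y : In x X ->
  (if Rlt_dec 0 (P x * W d x y) then P x * W d x y * ln (W d x y / PY (2 * K) N d P y) else 0)
  <= P x * W d x y * zeta (map (fK K) x) (map (fK K) y)
     + P x * W d x y * INR (length y) * ln (INR K) + t3 x y.
Proof.
  intro Hx. unfold t3. destruct (Rlt_dec 0 (P x * W d x y)) as [Hpw|Hpw].
  - pose proof (P_nonneg x Hx). pose proof (W_nonneg d x y Hd).
    assert (Hp : 0 < P x). { destruct H; auto. rewrite <- H in Hpw. lra. }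
    assert (Hw : 0 < W d x y). { destruct H0; auto. rewrite <- H0 in Hpw. lra. }
    pose proof (W_le_map d (fK K) x y Hd) as Hww.
    pose proof (P2_ge x Hx) as HP2.
    assert (H2 : 0 < P2 (map (fK K) x) * W d (map (fK K) x) (map (fK K) y)).
    { apply Rmult_lt_0_compat; lra. }
    pose proof (PY2_ge (map (fK K) x) (map (fK K) y) (in_words_map _ _ _ Hx)) as Hq.
    pose proof (PY_ge x y Hx) as Hpy.
    unfold zeta. destruct (Rlt_dec 0 _) as [_|Hn]; [|lra].
    unfold Qy.
    replace (P x * W d x y * INR (length y) * ln (INR K)) with
       (P x * W d x y * (INR (length y) * ln (INR K))) by ring.
    apply key_ineq; try lra.
    + apply pow_lt, INRK_pos.
    + apply ln_pow, INRK_pos.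
  - assert (Hz : P x * W d x y = 0).
    { pose proof (P_nonneg x Hx). pose proof (W_nonneg d x y Hd).
      pose proof (Rmult_le_pos _ _ H H0). lra. }
    rewrite Hz. lra.
Qed.

Lemma MI_sumR q P' : MI q N d P' = sumR (fun x => sumR (fun y =>
   if Rlt_dec 0 (P' x * W d x y) then P' x * W d x y * ln (W d x y / PY q N d P' y) else 0)
   (out_words q N)) (words q N).
Proof. reflexivity. Qed.

Lemma T1 : sumR (fun x => sumR (fun y => P x * W d x y * zeta (map (fK K) x) (map (fK K) y))
   (out_words (2 * K) N)) X = MI 2 N d P2.
Proof.
  transitivity (sumR (fun x => P x * (fun b => sumR (fun c => W d b c * zeta b c) (out_words 2 N)) (map (fK K) x)) X).
  - apply sumR_ext_in. intros x Hx. cbv beta. rewrite <- (lift_L1 K d N x (zeta (map (fK K) x))) by auto.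
    rewrite <- sumR_scal. apply sumR_ext_in. intros; ring.
  - rewrite (regroup (fun b => sumR (fun c => W d b c * zeta b c) (out_words 2 N))). rewrite MI_sumR. apply sumR_ext_in. intros b _. rewrite <- sumR_scal.
    apply sumR_ext_in. intros c _. unfold zeta. destruct (Rlt_dec _ _); [|ring].
    fold (PY2 c). ring.
Qed.

Lemma T2 : sumR (fun x => sumR (fun y => P x * W d x y * INR (length y) * ln (INR K))
   (out_words (2 * K) N)) X = INR N * (1 - d) * ln (INR K).
Proof.
  transitivity (sumR (fun x => (INR N * (1 - d) * ln (INR K)) * P x) X).
  2:{ rewrite sumR_scal, P_sum. ring. }
  apply sumR_ext_in. intros x Hx. pose proof Hx as Hx'. apply In_words in Hx'. destruct Hx' as [Hl HF].
  transitivity (P x * ln (INR K) * sumR (fun y => W d x y * INR (length y)) (out_words (2 * K) (length x))).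
  - rewrite <- sumR_scal, Hl. apply sumR_ext_in; intros; ring.
  - rewrite sumW_len by auto. rewrite Hl. ring.
Qed.

Lemma T3 : sumR (fun x => sumR (fun y => t3 x y) (out_words (2 * K) N)) X <= 0.
Proof.
  rewrite sumR_swap.
  apply Rle_trans with (sumR (fun y => Qy y - PY (2 * K) N d P y) (out_words (2 * K) N)).
  - apply sumR_le_in. intros y _.
    transitivity (sumR (fun x => P x * W d x y) X * (Qy y / PY (2 * K) N d P y - 1)).
    + right. rewrite Rmult_comm, <- sumR_scal. apply sumR_ext_in. intros x Hx. unfold t3.
      destruct (Rlt_dec _ _); [ring|].
      assert (Hz : P x * W d x y = 0).
      { pose proof (P_nonneg x Hx). pose proof (W_nonneg d x y Hd).
        pose proof (Rmult_le_pos _ _ H H0). lra. }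
      rewrite Hz; ring.
    + replace (sumR (fun x => P x * W d x y) X) with (PY (2 * K) N d P y) by reflexivity. pose proof (Qy_nonneg y).
      assert (0 <= PY (2 * K) N d P y).
      { rewrite PY_sumR. apply sumR_nonneg. intros. apply Rmult_le_pos; [apply P_nonneg; auto|apply W_nonneg; auto]. }
      destruct H0 as [H0|H0].
      * right. field. lra.
      * rewrite <- H0. lra.
  - unfold Rminus. rewrite sumR_plus.
    rewrite (sumR_ext_in (fun y => - PY (2 * K) N d P y) (fun y => -1 * PY (2 * K) N d P y)) by (intros; ring).
    rewrite sumR_scal, sum_Qy. pose proof sum_PY as HS. cbv beta in HS. change (fun y => PY (2 * K) N d P y) with (PY (2 * K) N d P) in HS. rewrite HS. lra.
Qed.

Lemma MI_bound : MI (2 * K) N d P <= MI 2 N d P2 + INR N * (1 - d) * ln (INR K).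
Proof.
  rewrite MI_sumR. rewrite <- T1, <- T2. pose proof T3.
  apply Rle_trans with (sumR (fun x => sumR (fun y =>
     P x * W d x y * zeta (map (fK K) x) (map (fK K) y)
     + P x * W d x y * INR (length y) * ln (INR K) + t3 x y) (out_words (2 * K) N)) X).
  - apply sumR_le_in. intros x Hx. apply sumR_le_in. intros y _. apply pointwise; auto.
  - rewrite (sumR_ext_in _ (fun x => sumR (fun y => P x * W d x y * zeta (map (fK K) x) (map (fK K) y)) (out_words (2 * K) N)
       + sumR (fun y => P x * W d x y * INR (length y) * ln (INR K)) (out_words (2 * K) N)
       + sumR (fun y => t3 x y) (out_words (2 * K) N))).
    + rewrite !sumR_plus. lra.
    + intros x _. rewrite !sumR_plus. reflexivity.
Qed.
End Main.


Lemma cv_const c : Un_cv (fun _ => c) c.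
Proof. intros eps He. exists 0%nat. intros. unfold Rdist. rewrite Rminus_diag, Rabs_R0. lra. Qed.

Theorem theorem1 (K : nat) (d C2K C2 : R) :
  (1 <= K)%nat -> 0 <= d <= 1 ->
  is_capacity (2 * K) d C2K -> is_capacity 2 d C2 ->
  C2K <= C2 + (1 - d) * ln (INR K).
Proof.
  intros HK Hd [M1 [HM1 Hc1]] [M2 [HM2 Hc2]].
  assert (Hb : forall N, M1 N <= M2 N + INR N * (1 - d) * ln (INR K)).
  { intro N. apply (proj2 (HM1 N)). intros r [P [HP ->]].
    eapply Rle_trans. apply (MI_bound K d N P HK Hd HP).
    apply Rplus_le_compat_r. apply (proj1 (HM2 N)). exists (P2 K N P). split; auto.
    apply P2_dist; auto. }
  apply (Rle_cv_lim (Un := fun n => M1 (S n) / INR (S n))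
                    (Vn := fun n => M2 (S n) / INR (S n) + (1 - d) * ln (INR K))); auto.
  - intro n. pose proof (Hb (S n)). pose proof (lt_0_INR (S n) ltac:(lia)).
    apply Rmult_le_reg_r with (INR (S n)); auto.
    unfold Rdiv. rewrite Rmult_plus_distr_r, !Rmult_assoc, Rinv_l by lra. lra.
  - apply CV_plus; auto. apply cv_const.
Qed.
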